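(* Let $p$ be a prime, $r\geq 0$ an integer, and $n\geq \sum_{k=1}^r p^k$ an integer. Then \[ B_{n-\sum_{k=1}^r p^k}\equiv B_{n,-r}\pmod p. \]
   Context: $B_n$ is the $n$-th Bell number. For any integer $s$, the $s$-Bell numbers are defined by $\sum_{n\geq0}B_{n,s}\frac{t^n}{n!}=e^{e^t-1+st}$. *)

(* Defs.v *)
From HB Require Import structures.
From mathcomp Require Import all_boot all_order all_algebra.
Set Implicit Arguments. Unset Strict Implicit. Unset Printing Implicit Defensive.
Import Order.TTheory GRing.Theory Num.Theory.
Local Open Scope ring_scope.

(* The exponential generating function e^{e^t - 1 + s t}, computed as a
   polynomial over rat that agrees with the formal power series up to
   degree N:  exp(f) with f = e^t - 1 + s t truncated at degree N, and exp
   truncated at f^N/N!.  Since f has zero constant term, the coefficients of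
   degree <= N are exact. *)
Definition egf_trunc (s : int) (N : nat) : {poly rat} :=
  \sum_(m < N.+1) ((m`!)%:R)^-1 *:
     (\sum_(1 <= j < N.+1)
        (((j`!)%:R)^-1 + (j == 1)%N%:R * s%:~R) *: 'X^j) ^+ m.

Definition sbell (n : nat) (s : int) : rat := (n`!)%:R * (egf_trunc s n)`_n.

Definition bell (n : nat) : rat := sbell n 0.

(* Main.v *)
Require Import Defs.
From HB Require Import structures.
From mathcomp Require Import all_boot all_order all_algebra all_field.
From mathcomp Require Import zify ring.
Set Implicit Arguments. Unset Strict Implicit. Unset Printing Implicit Defensive.
Import Order.TTheory GRing.Theory Num.Theory.
Local Open Scope ring_scope.

Definition acf (s : int) (j : nat) : rat := ((j`!)%:R)^-1 + (j == 1)%N%:R * s%:~R.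
Definition Pf (s : int) (N : nat) : {poly rat} :=
  \sum_(1 <= j < N.+1) acf s j *: 'X^j.
Definition G (s : int) (N M : nat) : {poly rat} :=
  \sum_(m < M) ((m`!)%:R)^-1 *: (Pf s N) ^+ m.

Lemma egfE s N : egf_trunc s N = G s N N.+1.
Proof. by []. Qed.

Definition eqK K (p q : {poly rat}) := forall i, (i < K)%N -> p`_i = q`_i.

Lemma eqK_mul K p p' q q' : eqK K p p' -> eqK K q q' -> eqK K (p * q) (p' * q').
Proof.
move=> hp hq i iK; rewrite !coefM; apply: eq_bigr => j _.
have jK : (j < K)%N by apply: leq_ltn_trans iK; rewrite -ltnS.
have jK2 : (i - j < K)%N by apply: leq_ltn_trans iK; rewrite leq_subr.
by rewrite hp // hq.
Qed.

Lemma eqK_exp K p p' m : eqK K p p' -> eqK K (p ^+ m) (p' ^+ m).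
Proof.
move=> h; elim: m => [|m IH]; first by move=> i _; rewrite !expr0.
by rewrite !exprS; apply: eqK_mul.
Qed.

Lemma eqK_scale K c p p' : eqK K p p' -> eqK K (c *: p) (c *: p').
Proof. by move=> h i iK; rewrite !coefZ h. Qed.

Lemma eqK_sum K M (F F' : nat -> {poly rat}) :
  (forall m, eqK K (F m) (F' m)) ->
  eqK K (\sum_(m < M) F m) (\sum_(m < M) F' m).
Proof. by move=> h i iK; rewrite !coef_sum; apply: eq_bigr => m _; apply: h. Qed.

Lemma coefPf s N i : (Pf s N)`_i = if (0 < i <= N)%N then acf s i else 0.
Proof.
elim: N => [|N IH].
  rewrite /Pf big_geq // coef0; case: i => //= i; by rewrite andbF.
rewrite /Pf big_nat_recr //= -/(Pf s N) coefD IH coefZ coefXn.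
case: (ltngtP i N.+1) => h.
- rewrite mulr0 addr0; congr (if _ then _ else _); lia.
- rewrite mulr0 addr0 andbF; have -> : (0 < i <= N)%N = false by lia. by [].
- have -> : (0 < i <= N)%N = false by lia.
  have -> : (0 < i)%N = true by lia.
  by rewrite h mulr1 add0r.
Qed.

Lemma Pf_eqK s N n : (n <= N)%N -> eqK n.+1 (Pf s N) (Pf s n).
Proof.
move=> hn i iK; rewrite !coefPf; rewrite ltnS in iK.
by rewrite iK (leq_trans iK hn).
Qed.

Lemma Pf_pow_low s N m i : (i < m)%N -> (Pf s N ^+ m)`_i = 0.
Proof.
elim: m i => [//|m IH] i him.
rewrite exprS coefM big1 // => j _.
case: (posnP j) => hj.
  by rewrite hj coefPf /= mul0r.
rewrite IH ?mulr0 //.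
have := ltn_ord j; lia.
Qed.

Lemma G_extra s N M n : (n < M)%N -> (G s N M)`_n = (G s N n.+1)`_n.
Proof.
elim: M => [//|M IH] hn.
case: (ltngtP n M) => h.
- rewrite /G big_ord_recr /= -/(G s N M) coefD coefZ Pf_pow_low // mulr0 addr0.
  exact: IH.
- lia.
- by rewrite h.
Qed.

Lemma G_stab s N M n : (n <= N)%N -> (n < M)%N -> (G s N M)`_n = (G s n n.+1)`_n.
Proof.
move=> hN hM; rewrite G_extra //.
apply: (@eqK_sum n.+1 n.+1 (fun m => ((m`!)%:R)^-1 *: (Pf s N) ^+ m)
   (fun m => ((m`!)%:R)^-1 *: (Pf s n) ^+ m)) => //.
by move=> m; apply: eqK_scale; apply: eqK_exp; apply: Pf_eqK.
Qed.

Lemma fact_scale (M : nat) (q : {poly rat}) :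
  (((M.+1)`!)%:R)^-1 *: (q *+ M.+1) = ((M`!)%:R)^-1 *: q.
Proof.
rewrite -scaler_nat scalerA; congr (_ *: _).
rewrite factS natrM invfM mulrAC mulVf ?mul1r //.
by rewrite pnatr_eq0.
Qed.

Lemma G_deriv s N M : (G s N M.+1)^`() = (Pf s N)^`() * G s N M.
Proof.
elim: M => [|M IH].
  by rewrite /G big_ord1 big_ord0 expr0 mulr0 fact0 invr1 scale1r derivC.
rewrite /G big_ord_recr /= -/(G s N M.+1) derivD IH derivZ deriv_exp /=.
rewrite fact_scale [G s N M.+1]/G big_ord_recr /= -/(G s N M) mulrDr.
by rewrite scalerAr.
Qed.

Definition cc s n := (egf_trunc s n)`_n.

Lemma cc_rec s n :
  cc s n.+1 *+ n.+1 =
  \sum_(j < n.+1) (acf s j.+1 *+ j.+1) * cc s (n - j).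
Proof.
rewrite /cc egfE.
have -> : (G s n.+1 n.+2)`_n.+1 *+ n.+1 = ((G s n.+1 n.+2)^`())`_n.
  by rewrite coef_deriv.
rewrite G_deriv coefM; apply: eq_bigr => j _.
rewrite coef_deriv coefPf egfE G_stab //.
- have := ltn_ord j => hj.
  by have -> : (0 < j.+1 <= n.+1)%N = true by lia.
- lia.
- lia.
Qed.

Lemma sbellE n s : sbell n s = (n`!)%:R * cc s n.
Proof. by []. Qed.

Lemma sbell0 s : sbell 0 s = 1.
Proof.
rewrite sbellE /cc egfE /G big_ord1 expr0 fact0 invr1 scale1r coef1 /=.
by rewrite mulr1.
Qed.

Lemma acfE s j : acf s j.+1 *+ j.+1 = ((j`!)%:R)^-1 + (j == 0)%N%:R * s%:~R.
Proof.
rewrite /acf mulrnDl; congr (_ + _).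
  rewrite factS natrM -[_ *+ j.+1]mulr_natr.
  have h1 : (j.+1)%:R != 0 :> rat by rewrite pnatr_eq0.
  have h2 : (j`!)%:R != 0 :> rat by rewrite pnatr_eq0 -lt0n fact_gt0.
  field; rewrite h2 /=; have -> : 1 + j%:R = j.+1%:R :> rat by rewrite -natr1 addrC.
  by [].
by case: j => [|j] //=; rewrite mul0r mul0rn.
Qed.

Lemma sbell_term s n j : (j <= n)%N ->
  (n`!)%:R * ((acf s j.+1 *+ j.+1) * cc s (n - j)) =
  sbell (n - j) s *+ 'C(n, j) + (j == 0)%N%:R * (s%:~R * sbell n s).
Proof.
move=> hj; rewrite acfE sbellE.
case: j hj => [|j] hj.
  by rewrite subn0 bin0 fact0 invr1 /= mul1r sbellE; ring.
rewrite /= mul0r addr0 mul0r addr0.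
have hf := bin_fact hj.
have -> : (n`!)%:R = ('C(n, j.+1))%:R * ((j.+1)`!)%:R * ((n - j.+1)`!)%:R :> rat.
  by rewrite -natrM -natrM -mulnA hf.
have hnz : ((j.+1)`!)%:R != 0 :> rat by rewrite pnatr_eq0 -lt0n fact_gt0.
rewrite -[_ *+ 'C(n, j.+1)]mulr_natr.
by field.
Qed.

Lemma sbell_rec n s :
  sbell n.+1 s = s%:~R * sbell n s + \sum_(j < n.+1) sbell (n - j) s *+ 'C(n, j).
Proof.
have -> : sbell n.+1 s = (n`!)%:R * (cc s n.+1 *+ n.+1).
  by rewrite sbellE factS natrM; ring.
rewrite cc_rec mulr_sumr.
rewrite (eq_bigr (fun j : 'I_n.+1 => sbell (n - j) s *+ 'C(n, j) +
     (nat_of_ord j == 0)%N%:R * (s%:~R * sbell n s))); last first.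
  by move=> j _; apply: sbell_term; have := ltn_ord j; lia.
rewrite big_split /= addrC; congr (_ + _).
rewrite big_ord_recl /= mul1r big1 ?addr0 // => j _.
by rewrite mul0r.
Qed.
Definition Lam (R : comNzRingType) (b : nat -> R) (q : {poly R}) : R :=
  \sum_(i < size q) q`_i * b i.

Lemma LamE (R : comNzRingType) (b : nat -> R) N (q : {poly R}) : (size q <= N)%N ->
  Lam b q = \sum_(i < N) q`_i * b i.
Proof.
move=> hN; rewrite /Lam (big_ord_widen N (fun i => q`_i * b i) hN) big_mkcond.
apply: eq_bigr => i _; case: ifP => // /negbT; rewrite -leqNgt => h.
by rewrite nth_default ?mul0r.
Qed.

Lemma LamD (R : comNzRingType) (b : nat -> R) (p q : {poly R}) : Lam b (p + q) = Lam b p + Lam b q.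
Proof.
set N := maxn (size p) (size q).
rewrite (@LamE _ _ N p) ?leq_maxl // (@LamE _ _ N q) ?leq_maxr //.
rewrite (@LamE _ _ N) ?size_add // -big_split /=.
by apply: eq_bigr => i _; rewrite coefD mulrDl.
Qed.

Lemma LamZ (R : comNzRingType) (b : nat -> R) c (q : {poly R}) : Lam b (c *: q) = c * Lam b q.
Proof.
rewrite (@LamE _ _ (size q)) ?size_scale_leq // /Lam mulr_sumr.
by apply: eq_bigr => i _; rewrite coefZ mulrA.
Qed.

Lemma Lam0 (R : comNzRingType) (b : nat -> R) : Lam b 0 = 0.
Proof. by rewrite -(scale0r (0 : {poly R})) LamZ mul0r. Qed.

Lemma LamN (R : comNzRingType) (b : nat -> R) (q : {poly R}) : Lam b (- q) = - Lam b q.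
Proof. by rewrite -scaleN1r LamZ mulN1r. Qed.

Lemma LamB (R : comNzRingType) (b : nat -> R) (p q : {poly R}) : Lam b (p - q) = Lam b p - Lam b q.
Proof. by rewrite LamD LamN. Qed.

Lemma LamMn (R : comNzRingType) (b : nat -> R) (q : {poly R}) n : Lam b (q *+ n) = Lam b q *+ n.
Proof. by rewrite -scaler_nat LamZ mulr_natl. Qed.

Lemma Lam_sum (R : comNzRingType) (b : nat -> R) n (F : 'I_n -> {poly R}) :
  Lam b (\sum_(i < n) F i) = \sum_(i < n) Lam b (F i).
Proof.
elim/big_rec2: _ => [|i y p _ <-]; first by rewrite Lam0.
by rewrite LamD.
Qed.

Lemma LamXn (R : comNzRingType) (b : nat -> R) k : Lam b 'X^k = b k.
Proof.
rewrite /Lam size_polyXn big_ord_recr /= coefXn eqxx mul1r big1 ?add0r // => i _.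
by rewrite coefXn (ltn_eqF (ltn_ord i)) mul0r.
Qed.

Lemma Lam1 (R : comNzRingType) (b : nat -> R) : Lam b 1 = b 0%N.
Proof. by rewrite -(expr0 'X) LamXn. Qed.

Definition brec (R : comNzRingType) (b : nat -> R) :=
  forall n, b n.+1 = \sum_(i < n.+1) b (n - i)%N *+ 'C(n, i).

Lemma LamXplus1 (R : comNzRingType) (b : nat -> R) n : brec b ->
  Lam b (('X + 1) ^+ n) = b n.+1.
Proof.
move=> hb; rewrite exprDn Lam_sum hb; apply: eq_bigr => i _.
by rewrite expr1n mulr1 LamMn LamXn.
Qed.

Lemma LamA (R : comNzRingType) (b : nat -> R) (g : {poly R}) : brec b ->
  Lam b ('X * g) = Lam b (g \Po ('X + 1)).
Proof.
move=> hb.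
rewrite comp_polyE Lam_sum.
rewrite -[X in Lam b ('X * X)](coefK g) poly_def mulr_sumr Lam_sum; apply: eq_bigr => i _.
by rewrite -scalerAr LamZ LamZ LamXplus1 // -exprS LamXn.
Qed.

Lemma Lam_map (R S : comNzRingType) (f : {rmorphism R -> S}) (b : nat -> R)
   (b' : nat -> S) (q : {poly R}) :
  (forall k, b' k = f (b k)) -> Lam b' (map_poly f q) = f (Lam b q).
Proof.
move=> hb; rewrite (@LamE _ _ (size q)); last by rewrite /map_poly size_poly.
rewrite /Lam rmorph_sum; apply: eq_bigr => i _.
by rewrite coef_map rmorphM hb.
Qed.

Lemma bell_rec : brec bell.
Proof. by move=> n; rewrite /bell sbell_rec mul0r add0r. Qed.

Lemma bell0 : bell 0 = 1.
Proof. exact: sbell0. Qed.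

Lemma sbell_Lam s n : sbell n s = Lam bell (('X + (s%:~R)%:P) ^+ n).
Proof.
set c : rat := s%:~R.
elim: n {-2}n (leqnn n) => [|n IH] k hk.
  by rewrite leqn0 in hk; rewrite (eqP hk) expr0 Lam1 bell0 sbell0.
case: (ltngtP k n.+1) => h; [by apply: IH | lia |].
rewrite h sbell_rec exprS mulrDl LamD mul_polyC LamZ -(IH n) // addrC.
congr (_ + _).
rewrite LamA; last exact: bell_rec.
rewrite rmorphXn /= comp_polyD comp_polyX comp_polyC.
rewrite -addrA [1 + _]addrC addrA exprDn Lam_sum; apply: eq_bigr => i _.
by rewrite expr1n mulr1 LamMn -IH // leq_subr.
Qed.

Lemma bell_int n : bell n \is a Num.int.
Proof.
elim: n {-2}n (leqnn n) => [|n IH] k hk.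
  by rewrite leqn0 in hk; rewrite (eqP hk) bell0.
case: (ltngtP k n.+1) => h; [by apply: IH | lia |].
rewrite h bell_rec; apply: rpred_sum => i _; apply: rpredMn; apply: IH.
exact: leq_subr.
Qed.

Definition bZ (n : nat) : int := Num.floor (bell n).

Lemma bZE n : (bZ n)%:~R = bell n.
Proof. by rewrite /bZ floorK // bell_int. Qed.

Lemma bZ_rec : brec bZ.
Proof.
move=> n; apply: (@intr_inj rat); rewrite bZE bell_rec rmorph_sum.
by apply: eq_bigr => i _; rewrite rmorphMn /= bZE.
Qed.
Lemma LamFall (R : comNzRingType) (b : nat -> R) (hb : brec b) k (q : {poly R}) :
  Lam b ((\prod_(i < k) ('X - (i%:R)%:P)) * q) = Lam b (q \Po ('X + (k%:R)%:P)).
Proof.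
elim: k q => [|k IH] q.
  by rewrite big_ord0 mul1r polyC0 addr0 comp_polyXr.
rewrite big_ord_recl /= polyC0 subr0 -mulrA LamA // rmorphM /= rmorph_prod /=.
rewrite (eq_bigr (fun i : 'I_k => 'X - ((i : nat)%:R)%:P)); last first.
  move=> i _; rewrite comp_polyB comp_polyX comp_polyC /= -natr1 polyCD polyC1.
  by ring.
rewrite IH -comp_polyA comp_polyD comp_polyX comp_polyC -natr1 polyCD polyC1.
by congr (Lam b (q \Po _)); ring.
Qed.

Lemma Fp_pow (p : nat) (pr : prime p) (x : 'F_p) k : x ^+ (p ^ k) = x.
Proof.
have hx : forall y : 'F_p, y ^+ p = y.
  by move=> y; have := expf_card y; rewrite card_Fp.
elim: k => [|k IH]; first by rewrite expn0 expr1.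
by rewrite expnSr exprM IH hx.
Qed.

Lemma frob_poly (p : nat) (pr : prime p) (c : 'F_p) k :
  ('X - c%:P) ^+ (p ^ k) = 'X^(p ^ k) - c%:P.
Proof.
have hch : ([char {poly 'F_p}]%R).-nat (p ^ k)%N.
  rewrite pnatX pnatE //; apply/orP; left.
  by rewrite pchar_poly pchar_Fp.
by rewrite exprDn_pchar // exprNn_pchar // -rmorphXn /= Fp_pow.
Qed.

Lemma Fp_fall (p : nat) (pr : prime p) :
  'X^p - 'X = \prod_(i < p) ('X - ((i%:R : 'F_p))%:P).
Proof.
have := finField_genPoly 'F_p; rewrite card_Fp // => ->.
have hinj : injective (fun i : 'I_p => (i%:R : 'F_p)).
  move=> i j /(congr1 val) /=; rewrite !val_Fp_nat // !modn_small //.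
  by move=> h; apply: val_inj.
have hbij : bijective (fun i : 'I_p => (i%:R : 'F_p)).
  by apply: inj_card_bij => //; rewrite card_Fp // card_ord.
rewrite (reindex (fun i : 'I_p => (i%:R : 'F_p))) //.
by apply: onW_bij.
Qed.

Lemma touchard (p : nat) (pr : prime p) (b : nat -> 'F_p) (hb : brec b) q :
  Lam b (('X^p - 'X) * q) = Lam b q.
Proof.
by rewrite Fp_fall // LamFall // pchar_Fp_0 // polyC0 addr0 comp_polyXr.
Qed.

Definition ann (R : comNzRingType) (b : nat -> R) (h : {poly R}) :=
  forall q, Lam b (h * q) = 0.

Lemma annD (R : comNzRingType) (b : nat -> R) h1 h2 :
  ann b h1 -> ann b h2 -> ann b (h1 + h2).
Proof. by move=> a1 a2 q; rewrite mulrDl LamD a1 a2 addr0. Qed.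

Lemma annM (R : comNzRingType) (b : nat -> R) h g : ann b h -> ann b (h * g).
Proof. by move=> a q; rewrite -mulrA a. Qed.

Lemma annX (R : comNzRingType) (b : nat -> R) h m : ann b h -> ann b (h ^+ m.+1).
Proof. by move=> a; rewrite exprS; apply: annM. Qed.

Lemma ann_touch (p : nat) (pr : prime p) (b : nat -> 'F_p) (hb : brec b) :
  ann b ('X^p - 'X - 1).
Proof. by move=> q; rewrite mulrBl LamB touchard // mul1r subrr. Qed.

Lemma ann_k (p : nat) (pr : prime p) (b : nat -> 'F_p) (hb : brec b) k :
  ann b ('X^(p ^ k) - 'X - ((k%:R : 'F_p))%:P).
Proof.
elim: k => [|k IH].
  by rewrite expn0 expr1 subrr polyC0 subr0 => q; rewrite mul0r /Lam size_poly0 big_ord0.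
have -> : 'X^(p ^ k.+1) - 'X - ((k.+1%:R : 'F_p))%:P =
   ('X^(p ^ k) - 'X - ((k%:R : 'F_p))%:P) ^+ p + ('X^p - 'X - 1).
  have hch : ([char {poly 'F_p}]%R).-nat p.
    by rewrite pnatE // pchar_poly pchar_Fp.
  rewrite exprDn_pchar // exprNn_pchar // exprDn_pchar // exprNn_pchar //.
  rewrite -rmorphXn /=.
  have -> : (k%:R : 'F_p) ^+ p = k%:R by rewrite -[p in _ ^+ p]expn1 Fp_pow.
  rewrite -exprM -expnSr -natr1 polyCD polyC1.
  by ring.
apply: annD; last exact: ann_touch.
have := annX p.-1 IH; by rewrite prednK // prime_gt0.
Qed.

Lemma main_Fp (p : nat) (pr : prime p) (b : nat -> 'F_p) (hb : brec b) r n :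
  (\sum_(1 <= k < r.+1) p ^ k <= n)%N ->
  Lam b 'X^(n - \sum_(1 <= k < r.+1) p ^ k) = Lam b (('X - ((r%:R : 'F_p))%:P) ^+ n).
Proof.
elim: r n => [|r IH] n.
  by rewrite big_geq // subn0 polyC0 subr0.
rewrite big_nat_recr //=.
set S := (\sum_(1 <= k < r.+1) p ^ k)%N.
set P := (p ^ r.+1)%N.
move=> hn.
have hm : (S <= n - P)%N by lia.
have -> : (n - (S + P) = (n - P) - S)%N by lia.
rewrite IH //.
have -> : n = ((n - P) + P)%N by lia.
rewrite addnK exprD frob_poly //.
set g := ('X - _) ^+ (n - P).
have -> : 'X^(p ^ r.+1) - ((r.+1%:R : 'F_p))%:P =
   ('X^(p ^ r.+1) - 'X - ((r.+1%:R : 'F_p))%:P) + 'X by ring.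
rewrite mulrDr LamD mulrC ann_k // add0r mulrC LamA //.
rewrite /g rmorphXn /= comp_polyB comp_polyX comp_polyC -natr1 polyCD polyC1.
by congr (Lam b (_ ^+ _)); ring.
Qed.

Lemma Fp_dvd (p : nat) (pr : prime p) (z : int) : (z%:~R : 'F_p) = 0 -> (p %| z)%Z.
Proof.
case: z => m h.
  rewrite /dvdz unfold_in /= (dvdn_pcharf (pchar_Fp pr)); apply/eqP; exact: h.
have h' : - ((m.+1)%:R : 'F_p) = 0 := h.
move/eqP: h'; rewrite oppr_eq0 => h'.
by rewrite /dvdz unfold_in /= (dvdn_pcharf (pchar_Fp pr)).
Qed.

Theorem corollary4 (p r n : nat) :
  prime p ->
  (\sum_(1 <= k < r.+1) p ^ k <= n)%N ->
  exists z : int,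
    bell (n - \sum_(1 <= k < r.+1) p ^ k)%N - sbell n (- (r%:Z)) = p%:R * z%:~R.
Proof.
move=> pr hS.
set S := (\sum_(1 <= k < r.+1) p ^ k)%N in hS *.
set q1 : {poly int} := 'X^(n - S).
set q2 : {poly int} := ('X - (r%:R)%:P) ^+ n.
set d := Lam bZ q1 - Lam bZ q2.
have hbQ : forall k, bell k = (bZ k)%:~R by move=> k; rewrite bZE.
have e1 : bell (n - S) = (Lam bZ q1)%:~R.
  by rewrite -(Lam_map _ hbQ) /q1 map_polyXn LamXn.
have e2 : sbell n (- (r%:Z)) = (Lam bZ q2)%:~R.
  rewrite -(Lam_map _ hbQ) /q2 sbell_Lam rmorphXn rmorphB /= map_polyX map_polyC /=.
  by rewrite rmorphN /= rmorph_nat polyCN.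
have ed : bell (n - S) - sbell n (- (r%:Z)) = d%:~R by rewrite e1 e2 /d rmorphB.
set bF : nat -> 'F_p := fun k => (bZ k)%:~R.
have hbF : forall k, bF k = (bZ k)%:~R by [].
have hbrec : brec bF.
  by move=> m; rewrite /bF bZ_rec rmorph_sum; apply: eq_bigr => i _; rewrite rmorphMn.
have hmain := main_Fp pr hbrec hS.
have hd : (d%:~R : 'F_p) = 0.
  rewrite /d rmorphB /= -!(Lam_map _ hbF) /q1 /q2 map_polyXn rmorphXn rmorphB /=.
  by rewrite map_polyX map_polyC /= rmorph_nat -/S hmain subrr.
have hdv := Fp_dvd pr hd.
exists (d %/ p)%Z.
by rewrite ed -{1}(divzK hdv) rmorphM /= mulrC.
Qed.
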